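(* Let $\mathcal D$ be universal, $\mathrm M=(M,d)\in\mathfrak U_{\mathcal D}$, and $r\in\mathcal D$, $r>0$, with $(r,2r]\cap\mathcal D=\emptyset$. Then for any three $\sim_r$-equivalence classes $A,B,C$ of $M$, $d_{\min}(B,C)\le d_{\min}(A,B)+d_{\min}(A,C)$; that is, $d_{\min}$ is a metric on the set $M/\!\sim_r$ of equivalence classes.
   Context: $\mathcal D$ is a finite subset of $\mathbb R_{\ge0}$ containing $0$. $\mathfrak U_{\mathcal D}$ is the class of countable homogeneous metric spaces (every isometry between finite subspaces extends to an isometry of the space onto itself) with distance set exactly $\mathcal D$ into which every finite metric space with distances in $\mathcal D$ embeds isometrically; $\mathcal D$ is universal if this class is nonempty. $x\sim_r y$ iff $d(x,y)\le r$ (an equivalence relation under the hypothesis on $r$). For $A,B\subseteq M$, $d_{\min}(A,B)=\min\{d(a,b):a\in A,b\in B\}$. *)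

(* Defs.v *)
From Stdlib Require Import Reals List.
Open Scope R_scope.

Definition finite_distance_set (D : R -> Prop) : Prop :=
  (exists l : list R, forall x, D x <-> In x l) /\
  (forall x, D x -> 0 <= x) /\ D 0.

Definition is_metric {M : Type} (d : M -> M -> R) : Prop :=
  (forall x y, d x y = 0 <-> x = y) /\
  (forall x y, d x y = d y x) /\
  (forall x y z, d x z <= d x y + d y z).

Definition countable_type (M : Type) : Prop :=
  exists f : M -> nat, forall x y, f x = f y -> x = y.

Definition distance_set_is {M : Type} (d : M -> M -> R) (D : R -> Prop) : Prop :=
  forall t, D t <-> exists x y, d x y = t.

Definition self_isometry {M : Type} (d : M -> M -> R) (g : M -> M) : Prop :=
  (forall x y, d (g x) (g y) = d x y) /\ (forall y, exists x, g x = y).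

(* Homogeneity: every isometry between finite subspaces (given as the
   correspondence xs_i |-> ys_i of two equally long lists) extends to an
   isometry of M onto itself. *)
Definition homogeneous {M : Type} (d : M -> M -> R) : Prop :=
  forall (xs ys : list M) (x0 : M),
    length xs = length ys ->
    (forall i j, (i < length xs)%nat -> (j < length xs)%nat ->
       d (nth i ys x0) (nth j ys x0) = d (nth i xs x0) (nth j xs x0)) ->
    exists g : M -> M, self_isometry d g /\
      forall i, (i < length xs)%nat -> g (nth i xs x0) = nth i ys x0.

Definition finite_metric_in (D : R -> Prop) (n : nat) (delta : nat -> nat -> R) : Prop :=
  (forall i j, (i < n)%nat -> (j < n)%nat -> (delta i j = 0 <-> i = j)) /\
  (forall i j, (i < n)%nat -> (j < n)%nat -> delta i j = delta j i) /\
  (forall i j k, (i < n)%nat -> (j < n)%nat -> (k < n)%nat ->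
      delta i k <= delta i j + delta j k) /\
  (forall i j, (i < n)%nat -> (j < n)%nat -> D (delta i j)).

Definition universal_for {M : Type} (d : M -> M -> R) (D : R -> Prop) : Prop :=
  forall (n : nat) (delta : nat -> nat -> R), finite_metric_in D n delta ->
    exists f : nat -> M, forall i j, (i < n)%nat -> (j < n)%nat ->
      d (f i) (f j) = delta i j.

Definition in_U {M : Type} (d : M -> M -> R) (D : R -> Prop) : Prop :=
  is_metric d /\ countable_type M /\ homogeneous d /\
  distance_set_is d D /\ universal_for d D.

Definition universal_D (D : R -> Prop) : Prop :=
  finite_distance_set D /\
  exists (M : Type) (d : M -> M -> R), in_U d D.

Definition rclass {M : Type} (d : M -> M -> R) (r : R) (a : M) : M -> Prop :=
  fun x => d x a <= r.

Definition is_dmin {M : Type} (d : M -> M -> R) (A B : M -> Prop) (m : R) : Prop :=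
  (exists a b, A a /\ B b /\ d a b = m) /\
  (forall a b, A a -> B b -> m <= d a b).

(* Main.v *)
Require Import Defs.
From Stdlib Require Import Reals Lra Lia List.
Open Scope R_scope.

Definition tet (s t m : R) (i j : nat) : R :=
  match i, j with
  | O, S O | S O, O | S (S O), S (S (S O)) | S (S (S O)), S (S O) => s
  | O, S (S O) | S (S O), O | S O, S (S (S O)) | S (S (S O)), S O => t
  | S O, S (S O) | S (S O), S O | O, S (S (S O)) | S (S (S O)), O => m
  | _, _ => 0
  end.

Lemma tet_metric (D : R -> Prop) s t m :
  0 < s -> 0 < t -> 0 < m -> s <= t + m -> t <= s + m -> m <= s + t ->
  D s -> D t -> D m -> D 0 -> finite_metric_in D 4 (tet s t m).
Proof.
  intros hs ht hm h1 h2 h3 Ds Dt Dm D0.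
  split; [|split; [|split]].
  - intros i j Hi Hj.
    destruct i as [|[|[|[|i]]]]; try lia;
    destruct j as [|[|[|[|j]]]]; try lia; simpl; split; intros; try lra; try lia.
  - intros i j Hi Hj.
    destruct i as [|[|[|[|i]]]]; try lia;
    destruct j as [|[|[|[|j]]]]; try lia; simpl; reflexivity.
  - intros i j k Hi Hj Hk.
    destruct i as [|[|[|[|i]]]]; try lia;
    destruct j as [|[|[|[|j]]]]; try lia;
    destruct k as [|[|[|[|k]]]]; try lia; simpl; lra.
  - intros i j Hi Hj.
    destruct i as [|[|[|[|i]]]]; try lia;
    destruct j as [|[|[|[|j]]]]; try lia; simpl; assumption.
Qed.

Theorem lemma3p3 (D : R -> Prop) (M : Type) (d : M -> M -> R) (r : R)
  (HD : universal_D D) (HM : in_U d D)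
  (Hr : D r) (Hrpos : 0 < r)
  (Hgap : forall t, r < t <= 2 * r -> ~ D t)
  (a b c : M) (mAB mAC mBC : R) :
  is_dmin d (rclass d r a) (rclass d r b) mAB ->
  is_dmin d (rclass d r a) (rclass d r c) mAC ->
  is_dmin d (rclass d r b) (rclass d r c) mBC ->
  mBC <= mAB + mAC.
Proof.
  destruct HM as [[Hd0 [Hsym Htri]] [_ [Hhom [Hdist Huniv]]]].
  assert (Hnn : forall x y, 0 <= d x y).
  { intros x y. pose proof (Htri x y x). rewrite (proj2 (Hd0 x x) eq_refl) in H.
    rewrite (Hsym y x) in H. lra. }
  assert (HinD : forall x y, D (d x y)).
  { intros x y. apply Hdist. eauto. }
  assert (Htr : forall x y z, d x y <= r -> d y z <= r -> d x z <= r).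
  { intros x y z H1 H2. destruct (Rle_dec (d x z) r) as [H|H]; auto.
    exfalso. apply (Hgap (d x z)); [|apply HinD].
    pose proof (Htri x y z). lra. }
  intros [[a1 [b1 [Ha1 [Hb1 E1]]]] _] [[a2 [c2 [Ha2 [Hc2 E2]]]] _] [_ HBC].
  unfold rclass in *.
  assert (Hs : d a1 a2 <= r) by (apply (Htr _ a); [auto | rewrite Hsym; auto]).
  assert (Hkey : exists c', d c' c2 <= r /\ d a1 c' <= mAC).
  { destruct (Req_dec (d a1 a2) 0) as [H0|H0].
    { apply Hd0 in H0; subst a2. exists c2.
      rewrite (proj2 (Hd0 c2 c2) eq_refl). lra. }
    destruct (Req_dec (d a1 c2) 0) as [H1|H1].
    { exists c2. rewrite (proj2 (Hd0 c2 c2) eq_refl), H1. split; [lra|].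
      rewrite <- E2; apply Hnn. }
    destruct (Req_dec mAC 0) as [H2|H2].
    { rewrite H2 in E2. apply Hd0 in E2; subst c2. exists a1.
      rewrite (proj2 (Hd0 a1 a1) eq_refl). split; lra. }
    set (s := d a1 a2) in *. set (t := d a1 c2) in *.
    assert (hs : 0 < s) by (pose proof (Hnn a1 a2); unfold s in *; destruct H; [lra|congruence]).
    assert (ht : 0 < t) by (pose proof (Hnn a1 c2); unfold t in *; destruct H; [lra|congruence]).
    assert (hm : 0 < mAC) by (pose proof (Hnn a2 c2); rewrite E2 in H; destruct H; [lra|congruence]).
    assert (t1 : s <= t + mAC).
    { unfold s, t. rewrite <- E2. pose proof (Htri a1 c2 a2). rewrite (Hsym c2 a2) in H. lra. }
    assert (t2 : t <= s + mAC).
    { unfold s, t. rewrite <- E2. apply Htri. }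
    assert (t3 : mAC <= s + t).
    { unfold s, t. rewrite <- E2. pose proof (Htri a2 a1 c2). rewrite (Hsym a2 a1) in H. lra. }
    assert (Dm : D mAC) by (rewrite <- E2; apply HinD).
    assert (D0 : D 0) by (destruct HD as [[_ [_ H]] _]; exact H).
    destruct (Huniv 4%nat (tet s t mAC)
      (tet_metric D s t mAC hs ht hm t1 t2 t3 (HinD _ _) (HinD _ _) Dm D0)) as [f Hf].
    destruct (Hhom (f 0%nat :: f 1%nat :: f 2%nat :: nil) (a1 :: a2 :: c2 :: nil) a1 eq_refl)
      as [g [[Hg _] Hgv]].
    { intros i j Hi Hj. simpl in Hi, Hj.
      destruct i as [|[|[|i]]]; try lia; destruct j as [|[|[|j]]]; try lia; simpl;
      rewrite Hf by lia; simpl; unfold s, t; try rewrite <- E2;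
      try reflexivity; try apply Hsym; try apply (proj2 (Hd0 _ _)); reflexivity. }
    exists (g (f 3%nat)).
    pose proof (Hgv 0%nat ltac:(simpl; lia)) as G0.
    pose proof (Hgv 2%nat ltac:(simpl; lia)) as G2.
    simpl in G0, G2.
    split.
    - rewrite <- G2, Hg, Hf by lia. simpl. exact Hs.
    - rewrite <- G0, Hg, Hf by lia. simpl. lra. }
  destruct Hkey as [c' [Hc'1 Hc'2]].
  assert (Hc' : d c' c <= r) by (apply (Htr _ c2); auto).
  pose proof (HBC b1 c' Hb1 Hc').
  pose proof (Htri b1 a1 c'). rewrite (Hsym b1 a1), E1 in H0. lra.
Qed.
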